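(* Let $(X,d)$ be a metric space and $T:X\to X$ a map. The system $(X,T)$ has sensitive dependence on initial conditions if and only if there is $\delta>0$ such that $r_\delta(x)$ is infinitesimal (in $\mathcal R$) for every $x\in X$.
   Context: $(X,T)$ has sensitive dependence on initial conditions if there is $\delta>0$ such that for every $x\in X$ and every neighborhood $U$ of $x$ there are $y\in U$ and $k\in\mathbb N$ with $d(T^k(x),T^k(y))>\delta$. For $x\in X$, $n\in\mathbb N$, $\epsilon>0$: $B(n,x,\epsilon)=\{y\in X: d(T^i(y),T^i(x))\le\epsilon \text{ for all } 0\le i\le n\}$ and $r(x,n,\epsilon)=\sup\{r>0: B_r(x)\subset B(n,x,\epsilon)\}$, where $B_r(x)$ is the open ball. Hyperreals: $\mathbb R^*$ is an ordered field containing $\mathbb R$, with a surjective ring homomorphism $J:\mathbb R^{\mathbb N}\to\mathbb R^*$ satisfying: if $a\in\mathbb R$ and there is $k\ge1$ with $\phi_{kn}\ge a$ for all $n\ge1$ then $J(\phi)\ge a$. $\xi\in\mathbb R^*$ is bounded if $|\xi|<k$ for some $k\in\mathbb N$. For nonzero $a,b$, $a\simeq b$ iff $a/b$, $b/a$ are bounded; $[a]$ is the class; $\mathbb R^*/{\simeq}$ is ordered by $[a]\le[b]$ iff for all $x\in[a],y\in[b]$, $x\simeq y$ or $x<y$. $\mathcal R$ is the totally ordered set of equivalence classes of monotone sequences in $\mathbb R^*/{\simeq}$ under $(a_i)\approx(b_j)$ iff neither $(a_i)<(b_j)$ nor $(b_j)<(a_i)$, where $(a_i)<(b_j)$ iff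 $\exists M$ with $a_n<b_m$ for all $n,m>M$; $\mathbb R^*/{\simeq}$ embeds into $\mathcal R$ as constant sequences. $r_\epsilon(x)=[J((r(x,n,\epsilon))_n)]$. An element of $\mathcal R$ is infinitesimal if it is strictly less than $c=[J(v)]$, the class of a constant sequence with value $v>0$ (the class of bounded, non-infinitesimal hyperreals). *)

(* Defs.v *)
From HB Require Import structures.
From mathcomp Require Import all_boot all_order all_algebra.
From mathcomp Require Import boolp classical_sets reals.
Set Implicit Arguments. Unset Strict Implicit. Unset Printing Implicit Defensive.
Import Order.TTheory GRing.Theory Num.Theory.
Local Open Scope ring_scope.
Local Open Scope classical_set_scope.

Section Dynamics.
Variables (R : realType) (X : Type) (d : X -> X -> R) (T : X -> X).

Definition is_metric : Prop :=
  [/\ forall x y, 0 <= d x y,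
      forall x y, d x y = 0 <-> x = y,
      forall x y, d x y = d y x &
      forall x y z, d x z <= d x y + d y z].

Definition oball (x : X) (r : R) : set X := [set y | d x y < r].

Definition is_nbhd (x : X) (U : set X) : Prop :=
  exists2 e : R, 0 < e & oball x e `<=` U.

Definition sensitive : Prop :=
  exists2 delta : R, 0 < delta &
    forall (x : X) (U : set X), is_nbhd x U ->
      exists2 y, U y & exists k : nat, delta < d (iter k T x) (iter k T y).

Definition bowen_ball (n : nat) (x : X) (eps : R) : set X :=
  [set y | forall i : nat, (i <= n)%N -> d (iter i T y) (iter i T x) <= eps].

Definition radii (x : X) (n : nat) (eps : R) : set R :=
  [set r | 0 < r /\ oball x r `<=` bowen_ball n x eps].

(* r(x,n,eps) = sup (radii x n eps).  Conventions for the degenerate cases: empty set -> 0, unbounded set (= all r > 0) -> 1. *)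
Definition rad (x : X) (n : nat) (eps : R) : R :=
  if `[< has_sup (radii x n eps) >] then sup (radii x n eps)
  else if `[< radii x n eps !=set0 >] then 1 else 0.

End Dynamics.

Section Hyperreals.
Variables (R : realType) (F : realFieldType).

(* the axioms on R^* and J : R^N -> R^*; a real a is seen in R^* as J (const a) *)
Definition hyperreal_map (J : (nat -> R) -> F) : Prop :=
  [/\ forall phi psi, J (fun n => phi n + psi n) = J phi + J psi,
      forall phi psi, J (fun n => phi n * psi n) = J phi * J psi,
      J (fun _ => 1) = 1,
      forall xi : F, exists phi, J phi = xi &
      forall (a : R) (phi : nat -> R),
        (exists2 k : nat, (1 <= k)%N &
            forall n : nat, (1 <= n)%N -> a <= phi (k * n)%N) ->
        J (fun _ => a) <= J phi].

Definition hbounded (xi : F) : Prop := exists k : nat, `|xi| < k%:R.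

Definition hsim (a b : F) : Prop :=
  [/\ 0 < a, 0 < b, hbounded (a / b) & hbounded (b / a)].

(* [a] <= [b] and [a] < [b] in R^*/≃, via representatives *)
Definition cle (a b : F) : Prop :=
  forall x y, hsim x a -> hsim y b -> hsim x y \/ x < y.
Definition clt (a b : F) : Prop := cle a b /\ ~ hsim a b.

(* (a_i) < (b_j) in the order defining the set \mathcal R *)
Definition seq_lt (a b : nat -> F) : Prop :=
  exists M : nat, forall n m : nat, (M < n)%N -> (M < m)%N -> clt (a n) (b m).

(* an element of \mathcal R (given by a monotone sequence of representatives)
   is infinitesimal iff it is < c, c = class of the constant sequence [J v], v = 1 *)
Definition R_infinitesimal (J : (nat -> R) -> F) (s : nat -> F) : Prop :=
  seq_lt s (fun _ => J (fun _ => 1)).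

(* r_eps(x) = [J((r(x,n,eps))_n)] is infinitesimal in \mathcal R (embedded as
   a constant sequence); the degenerate case J(...) = 0 (class undefined,
   below every class) counts as infinitesimal *)
Definition r_infinitesimal (J : (nat -> R) -> F) (X : Type) (d : X -> X -> R)
    (T : X -> X) (eps : R) (x : X) : Prop :=
  let xi := J (fun n => rad d T x n eps) in
  xi = 0 \/ (0 < xi /\ R_infinitesimal J (fun _ => xi)).

End Hyperreals.

(* Main.v *)
Require Import Defs.
From HB Require Import structures.
From mathcomp Require Import all_boot all_order all_algebra.
From mathcomp Require Import boolp classical_sets reals.
Import Order.TTheory GRing.Theory Num.Theory.
Local Open Scope ring_scope.

Section Alg.
Local Set Implicit Arguments.
Variable F : realFieldType.

Lemma hsim_refl (a : F) : 0 < a -> hsim a a.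
Proof.
move=> a0; split => //; exists 2%N; rewrite divff ?gt_eqF // normr1 ltr1n //.
Qed.

Lemma L1 (xi : F) : 0 < xi -> (forall m : nat, xi * m.+1%:R < 1) -> clt xi 1.
Proof.
move=> xi0 H; split.
- move=> x y [x0 _ [k1 Hk1] _] [y0 _ _ [k2 Hk2]]; right.
  rewrite ger0_norm ?divr_ge0 ?ltW // ltr_pdivrMr // in Hk1.
  rewrite ger0_norm ?divr_ge0 ?ltW // ltr_pdivrMr // in Hk2.
  have k2p : 0 < k2%:R :> F.
    rewrite ltr0n lt0n; apply/negP => /eqP k0; move: Hk2.
    by rewrite k0 mul0r ltNge ler01.
  have := H (k1 * k2)%N.
  have le1 : xi * (k1 * k2)%:R <= xi * (k1 * k2).+1%:R.
    by rewrite ler_pM2l // ler_nat.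
  move=> Hm; have Hm' := le_lt_trans le1 Hm.
  rewrite -(ltr_pM2r k2p) [y * _]mulrC.
  apply: (lt_trans _ Hk2).
  apply: (lt_trans _ Hm'); rewrite natrM mulrA ltr_pM2r //.
  by rewrite mulrC.
- move=> [_ _ _ [k Hk]].
  rewrite div1r ger0_norm ?invr_ge0 ?ltW // -div1r ltr_pdivrMr // in Hk.
  have Hk' := H k.
  have : k%:R * xi <= xi * k.+1%:R by rewrite mulrC ler_pM2l // ler_nat.
  move=> le; have := lt_trans Hk (le_lt_trans le Hk').
  by rewrite ltxx.
Qed.

Lemma L2 (xi : F) : 0 < xi -> clt xi 1 -> forall m : nat, xi * m.+1%:R < 1.
Proof.
move=> xi0 [Hc Hn] m.
have hs1 : hsim (1 : F) 1 by apply: hsim_refl.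
case: (Hc xi 1 (hsim_refl _ xi0) hs1) => [//|xi1].
have xb : hbounded (xi / 1) by exists 1%N; rewrite divr1 ger0_norm ?ltW.
have : ~ hbounded (1 / xi) by move=> hb; apply: Hn; split.
move=> nb; rewrite ltNge; apply/negP => H1; apply: nb.
exists m.+2; rewrite div1r ger0_norm ?invr_ge0 ?ltW //.
rewrite -div1r ltr_pdivrMr //; apply: (le_lt_trans H1).
by rewrite [_ * xi]mulrC ltr_pM2l // ltr_nat.
Qed.
End Alg.
Section JL.
Local Set Implicit Arguments.
Variables (R : realType) (F : realFieldType) (J : (nat -> R) -> F).
Hypothesis HJ : hyperreal_map J.

Lemma J0 : J (fun _ => 0) = 0.
Proof.
case: HJ => Hadd _ _ _ _.
have := Hadd (fun _ => 0) (fun _ => 0) => /=.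
have -> : (fun _ : nat => (0:R) + 0) = (fun _ => 0) by apply: funext => n; rewrite addr0.
set c := J _ => H.
have : c + c - c = c - c by rewrite -H.
by rewrite addrK subrr.
Qed.

Lemma Jopp phi : J (fun n => - phi n) = - J phi.
Proof.
case: HJ => Hadd _ _ _ _.
have := Hadd phi (fun n => - phi n) => /=.
have -> : (fun n => phi n + - phi n) = (fun _ => 0) by apply: funext => n; rewrite subrr.
rewrite J0 => H; apply/eqP; rewrite -subr_eq0 opprK addrC -H //.
Qed.

Lemma Jconst_le (a b : R) : a <= b -> J (fun _ => a) <= J (fun _ => b).
Proof.
case: HJ => _ _ _ _ Hm ab; apply: Hm; exists 1%N => //.
Qed.

Lemma Jnat n : J (fun _ => n%:R) = n%:R.
Proof.
case: HJ => Hadd _ H1 _ _.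
elim: n => [|n IH]; first by rewrite J0.
have -> : (fun _ : nat => (n.+1)%:R : R) = (fun k => (fun _ => 1) k + (fun _ => n%:R) k).
  by apply: funext => k; rewrite /= mulrS.
by rewrite Hadd H1 IH mulrS.
Qed.

Lemma Jle (phi : nat -> R) (a : R) (k : nat) : (1 <= k)%N ->
  (forall n : nat, (1 <= n)%N -> phi (k * n)%N <= a) -> J phi <= J (fun _ => a).
Proof.
case: HJ => Hadd _ _ _ Hm k1 H.
have := Hm 0 (fun n => (fun _ => a) n + (fun n => - phi n) n).
rewrite J0 Hadd Jopp subr_ge0; apply; exists k => // n n1.
by rewrite /= subr_ge0 H.
Qed.

Lemma Jge (phi : nat -> R) (a : R) : (forall n, a <= phi n) -> J (fun _ => a) <= J phi.
Proof.
case: HJ => _ _ _ _ Hm H; apply: Hm; exists 1%N => // n _; exact: H.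
Qed.

Lemma Jinv (c : R) (m : nat) : c * m.+1%:R = 1 -> J (fun _ => c) * m.+1%:R = 1.
Proof.
case: HJ => _ Hmul H1 _ _ Hc.
rewrite -Jnat -Hmul -H1; congr J; apply: funext => n //.
Qed.
End JL.

Section Rad.
Local Set Implicit Arguments.
Variables (R : realType) (X : Type) (d : X -> X -> R) (T : X -> X).

Lemma rad_ge0 x n eps : 0 <= Defs.rad d T x n eps.
Proof.
rewrite /Defs.rad; case: asboolP => [[[r Hr] Hub]|_].
  exact: le_trans (ltW Hr.1) (ub_le_sup Hub Hr).
by case: asboolP => _ //; rewrite ler01.
Qed.

Lemma rad_le x n eps r : 0 <= r ->
  (forall r', radii d T x n eps r' -> r' <= r) -> Defs.rad d T x n eps <= r.
Proof.
move=> r0 H; rewrite /Defs.rad; case: asboolP => [[ne _]|nh].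
  by apply: ge_sup => //.
case: asboolP => // ne; exfalso; apply: nh; split => //; exists r; exact: H.
Qed.

Lemma rad_ge x n eps e : radii d T x n eps e ->
  Order.min e 1 <= Defs.rad d T x n eps.
Proof.
move=> He; rewrite /Defs.rad; case: asboolP => [[ne Hub]|nh].
  by rewrite ge_min (ub_le_sup Hub He).
case: asboolP => [_|ne]; first by rewrite ge_min lexx orbT.
by exfalso; apply: ne; exists e.
Qed.
End Rad.

Theorem mainTheorem4 (R : realType) (F : realFieldType)
    (J : (nat -> R) -> F) (HJ : hyperreal_map J)
    (X : Type) (d : X -> X -> R) (Hd : is_metric d) (T : X -> X) :
  sensitive d T <->
  exists2 delta : R, 0 < delta & forall x : X, r_infinitesimal J d T delta x.
Proof.
have HJ' := HJ; case: HJ' => _ Hmul H1 _ _.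
case: Hd => _ _ Hsym _.
split.
- move=> [delta d0 Hs]; exists delta => // x.
  rewrite /r_infinitesimal /=.
  set xi := J (fun n => Defs.rad d T x n delta).
  have xi0 : 0 <= xi.
    by rewrite -(J0 HJ); apply: (Jge HJ) => n; apply: rad_ge0.
  have small : forall m : nat, xi * m.+1%:R < 1.
    move=> m; set c : R := (m.+2%:R)^-1.
    have c0 : 0 < c by rewrite invr_gt0 ltr0n.
    have [y Uy [k Hk]] := Hs x (oball d x c) (ex_intro2 _ _ c c0 (fun _ h => h)).
    have Hr : forall n, (k <= n)%N -> Defs.rad d T x n delta <= c.
      move=> n kn; apply: rad_le; first exact: ltW.
      move=> r' [r'0 sub]; rewrite leNgt; apply/negP => cr.
      have := sub y (lt_trans Uy cr) k kn; rewrite Hsym => le.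
      by move: Hk; rewrite ltNge le.
    have Hxi : xi <= J (fun _ => c).
      apply: (@Jle _ _ _ HJ _ _ k.+1) => // n n1; apply: Hr.
      by rewrite (leq_trans (leqnSn k)) // leq_pmulr.
    have Jc : J (fun _ => c) * m.+2%:R = 1.
      apply: (Jinv HJ c m.+1); by rewrite /c mulVf // pnatr_eq0.
    have Jc0 : 0 < J (fun _ => c).
      rewrite lt_neqAle; apply/andP; split.
        by apply/eqP => E; move: Jc; rewrite -E mul0r => /eqP; rewrite eq_sym oner_eq0.
      by rewrite -(J0 HJ); apply: (Jconst_le HJ); apply: ltW.
    apply: (le_lt_trans (y := J (fun _ => c) * m.+1%:R)).
      by rewrite ler_pM2r ?ltr0n.
    by rewrite -[X in _ < X]Jc ltr_pM2l // ltr_nat.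
  move: xi0; rewrite le_eqVlt => /orP [/eqP <-|xp]; [by left|right].
  split => //; exists 0%N => n m _ _; rewrite H1; exact: L1.
- move=> [delta d0 H]; exists delta => // x U [e e0 sub].
  apply: contrapT => Hno.
  have Hall : forall y, U y -> forall k, d (iter k T x) (iter k T y) <= delta.
    move=> y Uy k; rewrite leNgt; apply/negP => hk; apply: Hno.
    by exists y => //; exists k.
  have rad_e : forall n, radii d T x n delta e.
    move=> n; split => // y Hy i _; rewrite Hsym; apply: Hall; exact: sub.
  set c := Order.min e 1.
  have c0 : 0 < c by rewrite lt_min e0 ltr01.
  set xi := J (fun n => Defs.rad d T x n delta).
  have Hc : J (fun _ => c) <= xi.
    apply: (Jge HJ) => n; exact: rad_ge (rad_e n).
  set m := Num.Def.archi_bound (c^-1).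
  have cm : 1 < c * m%:R.
    by rewrite -ltr_pdivrMl // mulr1 archi_boundP // invr_ge0 ltW.
  have cm1 : 1 <= c * m.+1%:R.
    by apply: (le_trans (ltW cm)); rewrite ler_pM2l // ler_nat.
  have Jcm : 1 <= J (fun _ => c) * m.+1%:R.
    rewrite -(Jnat HJ) -Hmul -H1; exact: (Jconst_le HJ).
  have big : 1 <= xi * m.+1%:R.
    by apply: (le_trans Jcm); rewrite ler_pM2r ?ltr0n.
  have := H x; rewrite /r_infinitesimal /= -/xi => [[xi0|[xp [M HM]]]].
    by move: big; rewrite xi0 mul0r leNgt ltr01.
  have := HM M.+1 M.+1 (ltnSn M) (ltnSn M); rewrite H1 => hc.
  by move: big; rewrite leNgt (L2 xp hc).
Qed.
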